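(* Let $\rho>\chi>1$ and suppose there exists a $(\rho,\chi)$-bidding profile $G$. Let $\phi:(0,1]\to[1,\infty)$ be the function inducing $G$ (i.e. $\phi=G|_{(0,1]}$). Then there exists a tight $(\rho,\chi')$-bidding profile $G'$ induced by $\phi$ with $\chi'\le\chi$.
   Context: Given $1<\chi\le\rho$, a $(\rho,\chi)$-bidding profile is a non-decreasing, left-continuous $G:\mathbb{R}\to(0,\infty)$ such that (offset) $G(x)<1$ for $x<0$ and $G(x)\ge 1$ for $x>0$; (robustness) $\int_{-\infty}^{x+1}G(t)\,\mathrm{d} t\le\rho G(x)$ for all $x\in\mathbb{R}$; (consistency) $\int_{-\infty}^1G(t)\,\mathrm{d} t\le\chi$. A bidding profile $G$ is induced by $\phi:(0,1]\to[1,\infty)$ if $G|_{(0,1]}\equiv\phi$. A $(\rho,\chi)$-bidding profile $G$ is tight if additionally $\int_{-\infty}^{x+1}G(t)\,\mathrm{d} t=\rho\,G(x)$ for all $x\le 0$ and $\int_{-\infty}^1G(t)\,\mathrm{d} t=\chi$. *)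

(* Defs.v *)
From HB Require Import structures.
From mathcomp Require Import all_boot all_order all_algebra.
From mathcomp Require Import all_classical all_reals all_analysis.
Set Implicit Arguments. Unset Strict Implicit. Unset Printing Implicit Defensive.
Import Order.TTheory GRing.Theory Num.Theory.
Import numFieldNormedType.Exports.
Local Open Scope classical_set_scope.
Local Open Scope ring_scope.

Definition int_upto {R : realType} (G : R -> R) (a : R) : \bar R :=
  (\int[@lebesgue_measure R]_(t in `]-oo, a]) (G t)%:E)%E.

Definition bidding_profile {R : realType} (rho chi : R) (G : R -> R) : Prop :=
  [/\ (1 < chi /\ chi <= rho) /\ (forall x, 0 < G x),
      ({homo G : x y / x <= y} /\ forall x, G t @[t --> x^'-] --> G x),
      ((forall x, x < 0 -> G x < 1) /\ (forall x, (0 < x) -> (1 <= G x))),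
      (forall x, (int_upto G (x + 1) <= (rho * G x)%:E)%E)
    & (int_upto G 1 <= chi%:E)%E].

Definition tight_bidding_profile {R : realType} (rho chi : R) (G : R -> R) : Prop :=
  [/\ bidding_profile rho chi G,
      (forall x, x <= 0 -> int_upto G (x + 1) = (rho * G x)%:E)
    & int_upto G 1 = chi%:E].

Definition induced_by {R : realType} (phi : R -> R) (G : R -> R) : Prop :=
  forall x, 0 < x <= 1 -> G x = phi x.

(* Main.v *)
Require Import Defs.
From mathcomp Require Import all_boot all_order all_algebra.
From mathcomp Require Import all_classical all_reals all_analysis.
From mathcomp Require Import measurable_realfun lra.
Import Order.TTheory GRing.Theory Num.Theory.
Import numFieldNormedType.Exports.
Local Open Scope ring_scope.
Local Open Scope classical_set_scope.

Lemma mono_meas {R : realType} (H : R -> R) (D : set R) :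
  measurable D -> {homo H : x y / x <= y} ->
  measurable_fun D (EFin \o H).
Proof.
move=> mD hH; apply/measurable_EFinP; exact: nondecreasing_measurable.
Qed.

Lemma int_upto_ge0 {R : realType} (H : R -> R) a :
  (forall x, 0 <= H x) -> (0 <= int_upto H a)%E.
Proof. by move=> H0; apply: integral_ge0 => x _; rewrite lee_fin. Qed.

Lemma int_split {R : realType} (H : R -> R) a b :
  (forall x, 0 <= H x) -> {homo H : x y / x <= y} -> a <= b ->
  int_upto H b = (int_upto H a + \int[@lebesgue_measure R]_(t in `]a, b]) (H t)%:E)%E.
Proof.
move=> H0 hH ab; rewrite /int_upto.
rewrite (@itv_bndbnd_setU _ _ -oo%O (BRight a) (BRight b)) //.
rewrite ge0_integral_setU //.
- by rewrite -itv_bndbnd_setU ?bnd_simp //; exact: mono_meas.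
- by move=> x _; rewrite lee_fin.
- rewrite disj_set2E; apply/eqP/seteqP; split => x //= [].
  by rewrite !in_itv /= => xa /andP [] ax _; move: (lt_le_trans ax xa); rewrite ltxx.
Qed.

Lemma int_itv_lb {R : realType} (H : R -> R) a b c :
  (forall x, 0 <= H x) -> {homo H : x y / x <= y} -> a <= b -> 0 <= c ->
  (forall t, a < t <= b -> c <= H t) ->
  ((c * (b - a))%:E <= \int[@lebesgue_measure R]_(t in `]a, b]) (H t)%:E)%E.
Proof.
move=> H0 hH ab c0 Hc.
apply: (@le_trans _ _ (\int[@lebesgue_measure R]_(t in `]a, b]) (cst c%:E) t)%E).
  rewrite integral_cst // [X in (_ * X)%E](_ : _ = (if (a < b)%R then (b - a)%:E else 0)%E); last first.
    by move: (lebesgue_measure_itv (Interval (BRight a) (BRight b))) => /= E; rewrite lte_fin -EFinD in E; exact: E.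
  have [ab'|] := ltP a b; first by rewrite -EFinM.
  move=> ba; have eab : b = a by apply/le_anti; rewrite ba ab.
  by rewrite eab subrr mulr0 mule0.
apply: ge0_le_integral => //.
all: try (by move=> x _; rewrite lee_fin).
all: try exact: measurable_cst.
all: try exact: mono_meas.
all: try (by move=> x; rewrite /= in_itv /= => /Hc; rewrite lee_fin).
all: try (by move=> x; rewrite /= in_itv /= => /le12; rewrite lee_fin).
Qed.

Lemma int_itv_ub {R : realType} (H : R -> R) a b c :
  (forall x, 0 <= H x) -> {homo H : x y / x <= y} -> a <= b -> 0 <= c ->
  (forall t, a < t <= b -> H t <= c) ->
  (\int[@lebesgue_measure R]_(t in `]a, b]) (H t)%:E <= (c * (b - a))%:E)%E.
Proof.
move=> H0 hH ab c0 Hc.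
apply: (@le_trans _ _ (\int[@lebesgue_measure R]_(t in `]a, b]) (cst c%:E) t)%E); last first.
rewrite integral_cst // [X in (_ * X)%E](_ : _ = (if (a < b)%R then (b - a)%:E else 0)%E); last first.
    by move: (lebesgue_measure_itv (Interval (BRight a) (BRight b))) => /= E; rewrite lte_fin -EFinD in E; exact: E.
  have [ab'|] := ltP a b; first by rewrite -EFinM.
  move=> ba; have eab : b = a by apply/le_anti; rewrite ba ab.
  by rewrite eab subrr mulr0 mule0.
apply: ge0_le_integral => //.
all: try (by move=> x _; rewrite lee_fin).
all: try exact: measurable_cst.
all: try exact: mono_meas.
all: try (by move=> x; rewrite /= in_itv /= => /Hc; rewrite lee_fin).
all: try (by move=> x; rewrite /= in_itv /= => /le12; rewrite lee_fin).
Qed.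

Lemma int_mono_fun {R : realType} (H1 H2 : R -> R) a :
  (forall x, 0 <= H1 x) -> {homo H1 : x y / x <= y} -> {homo H2 : x y / x <= y} ->
  (forall x, x <= a -> H1 x <= H2 x) -> (int_upto H1 a <= int_upto H2 a)%E.
Proof.
move=> H0 h1 h2 le12; apply: ge0_le_integral => //.
all: try (by move=> x _; rewrite lee_fin).
all: try exact: measurable_cst.
all: try exact: mono_meas.
all: try (by move=> x; rewrite /= in_itv /= => /Hc; rewrite lee_fin).
all: try (by move=> x; rewrite /= in_itv /= => /le12; rewrite lee_fin).
Qed.

Lemma int_mono_set {R : realType} (H : R -> R) a b :
  (forall x, 0 <= H x) -> {homo H : x y / x <= y} -> a <= b ->
  (int_upto H a <= int_upto H b)%E.
Proof.
move=> H0 hH ab; rewrite (int_split H a b H0 hH ab); apply: leeDl.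
by apply: integral_ge0 => x _; rewrite lee_fin.
Qed.

Lemma int_lb_step {R : realType} (H : R -> R) a b c :
  (forall x, 0 <= H x) -> {homo H : x y / x <= y} -> a <= b -> 0 <= c ->
  (forall t, a < t <= b -> c <= H t) ->
  (int_upto H a + (c * (b - a))%:E <= int_upto H b)%E.
Proof.
move=> H0 hH ab c0 Hc; rewrite (int_split H a b H0 hH ab); apply: leeD2l.
exact: int_itv_lb.
Qed.

Lemma int_ub_step {R : realType} (H : R -> R) a b c :
  (forall x, 0 <= H x) -> {homo H : x y / x <= y} -> a <= b -> 0 <= c ->
  (forall t, a < t <= b -> H t <= c) ->
  (int_upto H b <= int_upto H a + (c * (b - a))%:E)%E.
Proof.
move=> H0 hH ab c0 Hc; rewrite (int_split H a b H0 hH ab); apply: leeD2l.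
exact: int_itv_ub.
Qed.

Definition Cls {R : realType} (G H : R -> R) : Prop :=
  [/\ forall x, 0 <= H x, forall x, H x <= G x, {homo H : x y / x <= y}
    & forall x, 0 < x -> H x = G x].

Definition Top {R : realType} (rho : R) (G H : R -> R) (x : R) : R :=
  if x <= 0 then fine (int_upto H (x + 1)) / rho else G x.

Definition Sset {R : realType} (rho : R) (G : R -> R) : set (R -> R) :=
  [set H | Cls G H /\ forall x, Top rho G H x <= H x].

Definition Gs {R : realType} (rho : R) (G : R -> R) (x : R) : R :=
  inf [set H x | H in Sset rho G].

Lemma fin_le1 {R : realType} {rho chi : R} {G H : R -> R} {a : R} :
  bidding_profile rho chi G -> Cls G H -> a <= 1 ->
  int_upto H a \is a fin_num /\ (int_upto H a <= chi%:E)%E.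
Proof.
move=> [_ [Gm _] _ _ Gc] [H0 HG Hm _] a1.
have G0 : forall x, 0 <= G x by move=> x; exact: (le_trans (H0 x) (HG x)).
have le : (int_upto H a <= chi%:E)%E.
  apply: (le_trans (int_mono_fun H G a H0 Hm Gm (fun x _ => HG x))).
  exact: (le_trans (int_mono_set G a 1 G0 Gm a1)).
split=> //; rewrite ge0_fin_numE; last exact: int_upto_ge0.
exact: (le_lt_trans le (ltry _)).
Qed.

Lemma Tmono {R : realType} {rho chi : R} {G H1 H2 : R -> R} :
  0 < rho -> bidding_profile rho chi G -> Cls G H1 -> Cls G H2 ->
  (forall x, H1 x <= H2 x) -> forall x, Top rho G H1 x <= Top rho G H2 x.
Proof.
move=> r0 bp C1 C2 le12 x; rewrite /Top; case: ifP => // x0.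
rewrite ler_pM2r ?invr_gt0 //.
have x1 : x + 1 <= 1 by move: x0 => /= x0; lra.
have [f1 _] := fin_le1 bp C1 x1; have [f2 _] := fin_le1 bp C2 x1.
apply: fine_le => //.
case: C1 C2 => [H10 _ H1m _] [_ _ H2m _].
exact: int_mono_fun.
Qed.

Lemma Top_Cls {R : realType} {rho chi : R} {G H : R -> R} :
  0 < rho -> bidding_profile rho chi G -> Cls G H ->
  (forall x, Top rho G H x <= H x) -> Cls G (Top rho G H).
Proof.
move=> r0 bp CH TH; have [H0 HG Hm HGp] := CH.
have [_ [Gm _] _ _ _] := bp.
split.
- move=> x; rewrite /Top; case: ifP => _.
    by apply: divr_ge0 (ltW r0); apply: fine_ge0; exact: int_upto_ge0.
  exact: (le_trans (H0 x) (HG x)).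
- by move=> x; apply: (le_trans (TH x)).
- move=> x y xy; case: (leP y 0) => y0.
    have x0 : x <= 0 by exact: le_trans xy y0.
    rewrite /Top x0 y0 ler_pM2r ?invr_gt0 //.
    have y1 : y + 1 <= 1 by move: x0 => /= x0; lra.
    have x1 : x + 1 <= 1 by move: x0 => /= x0; lra.
    have [f1 _] := fin_le1 bp CH x1; have [f2 _] := fin_le1 bp CH y1.
    apply: fine_le => //; apply: int_mono_set => //; by rewrite lerD2r.
  case: (leP x 0) => x0.
    apply: (le_trans (TH x)); apply: (le_trans (HG x)).
    by rewrite /Top ifN ?Gm // -ltNge.
  by rewrite /Top !ifN ?Gm // -ltNge.
- by move=> x x0; rewrite /Top ifN // -ltNge.
Qed.

Section GsTheory.
Variables (R : realType) (rho chi : R) (G : R -> R).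
Hypothesis r0 : 0 < rho.
Hypothesis bp : bidding_profile rho chi G.

Let SG : Sset rho G G.
Proof.
have [[_ Gp] [Gm _] _ Grob _] := bp.
split; first by split => // x; exact: ltW.
move=> x; rewrite /Top; case: ifP => // x0.
rewrite ler_pdivrMr // mulrC.
have x1 : x + 1 <= 1 by move: x0 => /= x0; lra.
have [f _] := fin_le1 bp (And4 (fun x => ltW (Gp x)) (fun x => lexx (G x)) Gm (fun _ _ => erefl)) x1.
by rewrite -lee_fin fineK.
Qed.

Let Gs_lb H x : Sset rho G H -> Gs rho G x <= H x.
Proof.
move=> SH; apply: ge_inf; last by exists H.
by exists 0 => y [K [[K0 _ _ _] _] <-].
Qed.

Let Gs_glb c x : (forall H, Sset rho G H -> c <= H x) -> c <= Gs rho G x.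
Proof.
move=> Hc; apply: lb_le_inf; first by exists (G x), G.
by move=> y [K SK <-]; exact: Hc.
Qed.

Lemma Gs_Cls : Cls G (Gs rho G).
Proof.
split.
- by move=> x; apply: Gs_glb => H [[H0 _ _ _] _].
- by move=> x; exact: Gs_lb.
- move=> x y xy; apply: Gs_glb => H SH.
  apply: (le_trans (Gs_lb H x SH)); by case: SH => [[_ _ Hm _] _]; exact: Hm.
- move=> x x0; apply/le_anti; rewrite Gs_lb //=.
  by apply: Gs_glb => H [[_ _ _ HG] _]; rewrite HG.
Qed.

Lemma Gs_fix x : Gs rho G x = Top rho G (Gs rho G) x.
Proof.
have TGs : forall x, Top rho G (Gs rho G) x <= Gs rho G x.
  move=> y; apply: Gs_glb => H SH; have [CH TH] := SH.
  apply: le_trans (TH y); apply: (Tmono r0 bp Gs_Cls CH) => z; exact: Gs_lb.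
apply/le_anti; rewrite TGs andbT; apply: Gs_lb; split.
  exact: (Top_Cls r0 bp Gs_Cls).
move=> y; apply: (Tmono r0 bp (Top_Cls r0 bp Gs_Cls TGs) Gs_Cls) => z; exact: TGs.
Qed.

End GsTheory.
Arguments Gs_Cls {R rho chi G}.
Arguments Gs_fix {R rho chi G}.

Theorem lemma2 (R : realType) (rho chi : R) (G : R -> R) :
  1 < chi -> chi < rho ->
  bidding_profile rho chi G ->
  forall phi : R -> R, induced_by phi G ->
  exists (chi' : R) (G' : R -> R),
    [/\ chi' <= chi, tight_bidding_profile rho chi' G' & induced_by phi G'].
Proof.
move=> chi1 chirho bp phi Gphi.
have r0 : 0 < rho by lra.
have [[_ Gp] [Gm Glc] [Goff1 Goff2] Grob Gcons] := bp.
set F := Gs rho G.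
have CF : Cls G F := Gs_Cls r0 bp.
have [F0 FG Fm FGp] := CF.
have fin x : x <= 1 -> int_upto F x \is a fin_num by move=> x1; have [] := fin_le1 bp CF x1.
have fixeq x : x <= 0 -> int_upto F (x + 1) = (rho * F x)%:E.
  move=> x0; have x1 : x + 1 <= 1 by lra.
  rewrite /F (Gs_fix r0 bp x) /Top x0 -/F mulrC divfK ?gt_eqF //.
  by rewrite fineK // fin.
have Fpos : forall x, 0 < F x.
  have ind : forall n : nat, forall x, - (n%:R) < 2 * x -> 0 < F x.
    elim=> [|n IH] x.
      by rewrite oppr0 => hx; rewrite FGp ?Gp //; lra.
    rewrite -addn1 natrD => hx.
    case: (ltP 0 x) => x0; first by rewrite FGp ?Gp.
    have h1 : 0 < F (x + 2^-1) by apply: IH; lra.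
    have le1 := int_lb_step F (x + 2^-1) (x + 1) (F (x + 2^-1)) F0 Fm
      ltac:(lra) (ltW h1) (fun t ht => Fm _ _ (ltW (proj1 (andP ht)))).
    have le2 : (0 <= int_upto F (x + 2^-1))%E by exact: int_upto_ge0.
    have : ((F (x + 2^-1) * (x + 1 - (x + 2^-1)))%:E <= (rho * F x)%:E)%E.
      rewrite -fixeq //; apply: le_trans le1.
      by rewrite -[X in (X <= _)%E]add0e; apply: leeD2r.
    rewrite lee_fin => h2.
    have : 0 < rho * F x by apply: lt_le_trans h2; apply: mulr_gt0 => //; lra.
    by rewrite pmulr_rgt0.
  move=> x; apply: (ind (Num.Def.archi_bound `|2 * x|)).
  have := archi_boundP (normr_ge0 (2 * x)).
  have := ler_norm (- (2 * x)); rewrite normrN; lra.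
set chi' := fine (int_upto F 1).
have Ichi : int_upto F 1 = chi'%:E by rewrite /chi' fineK // fin.
have [_ Ile] := fin_le1 bp CF (lexx (1 : R)).
have chi'le : chi' <= chi by rewrite -lee_fin -Ichi.
have F1 : forall t, 0 < t <= 1 -> 1 <= F t.
  by move=> t /andP [t0 _]; rewrite FGp // Goff2.
have chi'gt : 1 < chi'.
  have h1 := Fpos (- 2^-1).
  have le1 := int_lb_step F (- 2^-1) 0 (F (- 2^-1)) F0 Fm
      ltac:(lra) (ltW h1) (fun t ht => Fm _ _ (ltW (proj1 (andP ht)))).
  have le2 := int_lb_step F 0 1 1 F0 Fm ler01 ler01 F1.
  have e0 : int_upto F 0 = (fine (int_upto F 0))%:E by rewrite fineK // fin.
  have em : int_upto F (- 2^-1) = (fine (int_upto F (- 2^-1)))%:E.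
    by rewrite fineK // fin //; lra.
  have := fine_ge0 (int_upto_ge0 F (- 2^-1) F0).
  rewrite e0 em -EFinD lee_fin in le1.
  rewrite e0 Ichi -EFinD lee_fin in le2.
  lra.
have Flc : forall x, F t @[t --> x^'-] --> F x.
  move=> x; case: (ltP 0 x) => x0.
    apply/cvgrPdist_lt => e e0; move: (Glc x) => /cvgrPdist_lt/(_ e e0) hG.
    near=> t.
    have t0 : 0 < t by near: t; exact: nbhs_left_gt.
    rewrite !FGp //; near: t; exact: hG.
  set M := G 1.
  have M0 : 0 <= M by exact: ltW (Gp 1).
  apply/cvgrPdist_lt => e e0.
  have d0 : 0 < e * rho / (M + 1) by rewrite divr_gt0 ?mulr_gt0 //; lra.
  near=> t.
  have tx : t < x by near: t; exact: nbhs_left_lt.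
  have hd : x - t < e * rho / (M + 1) by near: t; exact: nbhs_left_ltBl.
  have Ftx : F t <= F x := Fm _ _ (ltW tx).
  have t0 : t <= 0 by lra.
  have Mb : forall s, t + 1 < s <= x + 1 -> F s <= M.
    by move=> s /andP [_ hs]; apply: le_trans (FG s) (Gm _ _ _); lra.
  have ub := int_ub_step F (t + 1) (x + 1) M F0 Fm ltac:(lra) M0 Mb.
  rewrite !fixeq // -EFinD lee_fin in ub.
  rewrite ger0_norm ?subr_ge0 //.
  rewrite ltr_pdivlMr in hd; last lra.
  nra.
Unshelve. all: try by end_near.
exists chi', F; split => //; last first.
  by move=> x hx; rewrite FGp ?Gphi //; case/andP: hx.
split => //.
split.
- by split; [split; lra | exact: Fpos].
- by split; [exact: Fm | exact: Flc].
- split; first by move=> x x0; exact: le_lt_trans (FG x) (Goff1 x x0).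
  by move=> x x0; rewrite FGp // Goff2.
- move=> x; case: (leP x 0) => x0; first by rewrite fixeq.
  apply: le_trans (int_mono_fun F G (x + 1) F0 Fm Gm (fun t _ => FG t)) _.
  by rewrite FGp.
- by rewrite Ichi.
Qed.
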